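(* Let $G\in\mathcal{T}$. Let $\tau$ be a (possibly improper) cycle of edges in $G$ which is the boundary cycle of the graph $H$ of an embedded triangulated disc in $G$. Let $K$ be a $(3,6)$-tight subgraph of $G$ with $K\cap H=\tau$. Then $\tau$ is a $3$-cycle.
   Context: A torus graph with a single hole is a graph $G$ determined by a triple $(T,D,i)$ as follows. $M$ is a finite simplicial complex triangulating the torus $S^1\times S^1$ whose $1$-skeleton $T$ is a simple graph. $D$ is a simplicial complex triangulating a closed disc. $i:D\to M$ is a simplicial map which is injective on $2$-simplexes and respects adjacency of $2$-simplexes. $G$ is the subgraph of $T$ obtained by deleting the edges that are images under $i$ of interior $1$-simplexes of $D$. Its facial $3$-cycles (faces) are the $3$-cycles of $T$ bounding $2$-simplexes of $M$ that are not images of $2$-simplexes of $D$. For a finite simple graph $H=(V,E)$ the freedom number is $f(H)=3|V|-|E|$. $H$ is $(3,6)$-tight if $f(H)=6$ and $f(K)\ge 6$ for every subgraph $K$ with at least $3$ vertices. $\mathcal{T}$ denotes the class of $(3,6)$-tight torus graphs with a single hole. An embedded triangulated disc in $G$ is the image of a simplicial map from a triangulated disc to the simplicial complex of $G$ (whose $2$-simplexes are the faces of $G$) that is injective on $2$-simplexes. Its graph $H$ is the image graph, and its boundary cycle $\tau$ is the image of the disc's boundary cycle (possibly with repeated vertices or edges). *)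

(* Defs.v *)
From HB Require Import structures.
From mathcomp Require Import all_boot all_order all_algebra.
Set Implicit Arguments. Unset Strict Implicit. Unset Printing Implicit Defensive.

Section Complexes.
Variable V : finType.

(* A pure 2-dimensional simplicial complex is given by its set F of
   2-simplexes (triangles, 3-element vertex sets); its 1- and 0-simplexes
   are the faces of these triangles. *)

Definition cverts (F : {set {set V}}) : {set V} := \bigcup_(f in F) f.

Definition cedges (F : {set {set V}}) : {set {set V}} :=
  [set e : {set V} | (#|e| == 2) && [exists f in F, e \subset f]].

Definition nfaces (F : {set {set V}}) (e : {set V}) : nat :=
  #|[set f in F | e \subset f]|.

Definition int_edges (F : {set {set V}}) : {set {set V}} :=
  [set e in cedges F | nfaces F e == 2].
Definition bdry_edges (F : {set {set V}}) : {set {set V}} :=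
  [set e in cedges F | nfaces F e == 1].

Definition gconnected (Vs : {set V}) (Es : {set {set V}}) : Prop :=
  forall x y, x \in Vs -> y \in Vs ->
    connect [rel a b | [set a; b] \in Es] x y.

Definition link_verts (F : {set {set V}}) (v : V) : {set V} :=
  [set u | (u != v) && [exists f in F, (v \in f) && (u \in f)]].
Definition link_edges (F : {set {set V}}) (v : V) : {set {set V}} :=
  [set e in cedges F | (v \notin e) && ((v |: e) \in F)].

(* coherent orientation: each triangle gets a cyclic ordering of its
   vertices, and no directed edge is induced by two distinct triangles *)
Definition dedges (t : V * V * V) : seq (V * V) :=
  [:: (t.1.1, t.1.2); (t.1.2, t.2); (t.2, t.1.1)].

Definition orientable (F : {set {set V}}) : Prop :=
  exists ori : {set V} -> V * V * V,
    (forall f, f \in F -> f = [set (ori f).1.1; (ori f).1.2; (ori f).2]) /\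
    (forall f g p, f \in F -> g \in F ->
        p \in dedges (ori f) -> p \in dedges (ori g) -> f = g).

Definition pure2 (F : {set {set V}}) : Prop :=
  F != set0 /\ forall f, f \in F -> #|f| = 3.

(* F triangulates the torus, with vertex set all of V:
   a connected closed orientable combinatorial surface of Euler
   characteristic 0 (classification of surfaces). *)
Definition torus_triangulation (F : {set {set V}}) : Prop :=
  pure2 F /\ cverts F = setT /\
  (forall e, e \in cedges F -> nfaces F e = 2) /\
  (forall v, v \in cverts F -> gconnected (link_verts F v) (link_edges F v)) /\
  gconnected (cverts F) (cedges F) /\
  orientable F /\
  #|cverts F| + #|F| = #|cedges F|.

(* F triangulates a closed disc: a connected combinatorial surface with
   nonempty boundary and Euler characteristic 1. *)
Definition disc_triangulation (F : {set {set V}}) : Prop :=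
  pure2 F /\
  (forall e, e \in cedges F -> nfaces F e = 1 \/ nfaces F e = 2) /\
  (forall v, v \in cverts F -> gconnected (link_verts F v) (link_edges F v)) /\
  gconnected (cverts F) (cedges F) /\
  bdry_edges F != set0 /\
  #|cverts F| + #|F| = #|cedges F| + 1.

Definition boundary_cycle (F : {set {set V}}) (c : seq V) : Prop :=
  [/\ uniq c, 3 <= size c, {subset c <= cverts F} &
      bdry_edges F = [set [set x; next c x] | x in c]].

Definition freedom (Vs : {set V}) (Es : {set {set V}}) : int :=
  (Posz (3 * #|Vs|) - Posz #|Es|)%R.

Definition is_subgraph (Vk : {set V}) (Ek : {set {set V}})
  (Vs : {set V}) (Es : {set {set V}}) : Prop :=
  [/\ Vk \subset Vs, Ek \subset Es & forall e, e \in Ek -> e \subset Vk].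

Definition tight36 (Vs : {set V}) (Es : {set {set V}}) : Prop :=
  freedom Vs Es = Posz 6 /\
  forall Vk Ek, is_subgraph Vk Ek Vs Es -> 3 <= #|Vk| -> (Posz 6 <= freedom Vk Ek)%R.

End Complexes.

Section Maps.
Variables W V : finType.

Definition simp_map_inj2 (FD : {set {set W}}) (FT : {set {set V}})
  (ET : {set {set V}}) (phi : W -> V) : Prop :=
  [/\ (forall f, f \in FD -> {in f &, injective phi} /\ phi @: f \in FT),
      (forall e, e \in cedges FD -> phi @: e \in ET) &
      (forall f g, f \in FD -> g \in FD -> phi @: f = phi @: g -> f = g) ].

Definition respects_adjacency (FD : {set {set W}}) (phi : W -> V) : Prop :=
  forall f g, f \in FD -> g \in FD -> #|f :&: g| = 2 ->
    #|(phi @: f) :&: (phi @: g)| = 2.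

(* the torus graph with a single hole determined by (T, D, i) *)
Definition hole_graph_edges (FM : {set {set V}}) (FD : {set {set W}})
  (i : W -> V) : {set {set V}} :=
  cedges FM :\: [set i @: e | e : {set W} in int_edges FD].

Definition hole_graph_faces (FM : {set {set V}}) (FD : {set {set W}})
  (i : W -> V) : {set {set V}} :=
  FM :\: [set i @: f | f : {set W} in FD].

Definition torus_hole_data (FM : {set {set V}}) (FD : {set {set W}})
  (i : W -> V) : Prop :=
  [/\ torus_triangulation FM, disc_triangulation FD,
      simp_map_inj2 FD FM (cedges FM) i & respects_adjacency FD i].

End Maps.

(* Main.v *)
Require Import Defs.
From HB Require Import structures.
From mathcomp Require Import all_boot all_order all_algebra.
From mathcomp Require Import zify.
Set Implicit Arguments. Unset Strict Implicit. Unset Printing Implicit Defensive.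

Section Aux.
Variable W : finType.

Lemma faces_edges_card (F : {set {set W}}) f : (forall f, f \in F -> #|f| = 3) -> f \in F ->
  #|[set e in cedges F | e \subset f]| = 3.
Proof.
move=> H3 fF.
have -> : [set e in cedges F | e \subset f] = [set A : {set W} | A \subset f & #|A| == 2].
  apply/setP => e; rewrite /cedges !inE.
  apply/andP/andP => [[/andP[e2 _] ef]|[ef e2]]; first by split.
  split=> //; rewrite e2 /=; apply/existsP; exists f; by rewrite fF.
by rewrite cards_draws H3.
Qed.

Lemma card_set_sum (T : finType) (A : {pred T}) (P : pred T) :
  #|[set x in A | P x]| = \sum_(x in A) (P x : nat).
Proof.
rewrite -sum1_card big_mkcond [RHS]big_mkcond /=.
by apply: eq_bigr => x _; rewrite !inE; case: (x \in A); case: (P x).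
Qed.


Lemma memI (F : {set {set W}}) e : (e \in int_edges F) = (e \in cedges F) && (nfaces F e == 2).
Proof. by rewrite /int_edges in_set. Qed.
Lemma memB (F : {set {set W}}) e : (e \in bdry_edges F) = (e \in cedges F) && (nfaces F e == 1).
Proof. by rewrite /bdry_edges in_set. Qed.

Lemma double_count (F : {set {set W}}) :
  \sum_(f in F) #|[set e in cedges F | e \subset f]| = \sum_(e in cedges F) nfaces F e.
Proof.
rewrite /nfaces.
under eq_bigr do rewrite card_set_sum.
under [RHS]eq_bigr do rewrite card_set_sum.
exact: exchange_big.
Qed.

Lemma disc_count (F : {set {set W}}) : disc_triangulation F ->
  3 * #|cverts F| = #|int_edges F| + 2 * #|bdry_edges F| + 3.
Proof.
case=> [[_ H3] [H12 [_ [_ [_ Heu]]]]].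
have h1 : 3 * #|F| = #|bdry_edges F| + 2 * #|int_edges F|.
  have -> : 3 * #|F| = \sum_(f in F) #|[set e in cedges F | e \subset f]|.
    by rewrite mulnC -sum_nat_const; apply: eq_bigr => f fF; rewrite faces_edges_card.
  rewrite double_count (bigID (fun e => nfaces F e == 1)) /=.
  congr (_ + _).
    rewrite -sum1_card; apply: eq_big => [e|e /andP[_ /eqP //]].
    by rewrite memB.
  rewrite mulnC -sum_nat_const; apply: eq_big => [e|e /andP[eE ne1]].
    rewrite memI; case eE: (e \in cedges F) => //=.
    by case: (H12 e eE) => ->.
  by case: (H12 e eE) => // h; rewrite h in ne1.
have h2 : #|cedges F| = #|bdry_edges F| + #|int_edges F|.
  rewrite -sum1_card (bigID (fun e => nfaces F e == 1)) /= -!sum1_card.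
  congr (_ + _); apply: eq_bigl => e; rewrite ?memB ?memI.
    by [].
  case eE: (e \in cedges F) => //=.
  by case: (H12 e eE) => ->.
lia.
Qed.

End Aux.

Lemma inj_sub (T U : finType) (f : T -> U) (g e e' : {set T}) :
  {in g &, injective f} -> e \subset g -> e' \subset g -> f @: e = f @: e' -> e = e'.
Proof.
move=> inj se se' E.
have H : forall a b : {set T}, a \subset g -> b \subset g -> f @: a = f @: b -> a \subset b.
  move=> a b sa sb Eab; apply/subsetP => x xa.
  have : f x \in f @: b by rewrite -Eab imset_f.
  case/imsetP => y yb fxy.
  by rewrite (inj x y (subsetP sa x xa) (subsetP sb y yb) fxy).
by apply/eqP; rewrite eqEsubset (H e e' se se' E) (H e' e se' se (esym E)).
Qed.

Lemma two_of_card2 (T : finType) (S : {set T}) a b c : #|S| = 2 -> a \in S -> b \in S ->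
  c \in S -> a != b -> c = a \/ c = b.
Proof.
move=> S2 aS bS cS ab.
have E : [set a; b] = S.
  apply/eqP; rewrite eqEcard S2 cards2 ab /= andbT.
  by apply/subsetP => x; rewrite !inE => /orP[]/eqP->.
by move: cS; rewrite -E !inE => /orP[]/eqP->; [left|right].
Qed.

Lemma int_edge_inj (V W : finType) (FM : {set {set V}}) (FD : {set {set W}})
  (FH : {set {set V}}) (EH : {set {set V}}) (psi : W -> V) :
  (forall e, e \in cedges FM -> nfaces FM e = 2) -> FH \subset FM ->
  simp_map_inj2 FD FH EH psi ->
  forall e e', e \in int_edges FD -> e' \in cedges FD -> psi @: e = psi @: e' -> e = e'.
Proof.
move=> HM sHM [Hf _ Hinj] e e'.
rewrite memI => /andP[eE /eqP n2].
rewrite /cedges inE => /andP[_ /existsP[g /andP[gF e'g]]] Eq.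
move: n2; rewrite /nfaces => /eqP/cards2P[f1 [f2 [f12 Ef]]].
have f1in : f1 \in [set f in FD | e \subset f] by rewrite Ef !inE eqxx.
have f2in : f2 \in [set f in FD | e \subset f] by rewrite Ef !inE eqxx orbT.
move: f1in f2in; rewrite !inE => /andP[f1F ef1] /andP[f2F ef2].
have [inj1 f1M] := Hf f1 f1F.
have [_ f2M] := Hf f2 f2F.
have [injg gM] := Hf g gF.
have e2 : #|e| = 2 by move: eE; rewrite /cedges inE => /andP[/eqP].
have pe2 : #|psi @: e| = 2.
  rewrite card_in_imset // => x y xe ye; apply: inj1; exact: (subsetP ef1).
have S : forall h, h \in FH -> psi @: e \subset h -> h \in [set h in FM | psi @: e \subset h].
  by move=> h hH sh; rewrite inE sh (subsetP sHM h hH).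
have peM : psi @: e \in cedges FM.
  rewrite /cedges inE pe2 eqxx /=; apply/existsP; exists (psi @: f1).
  by rewrite (subsetP sHM _ f1M) imsetS.
have := HM _ peM; rewrite /nfaces => N2.
have ab : psi @: f1 != psi @: f2.
  by apply/eqP => E; move: f12; rewrite (Hinj _ _ f1F f2F E) eqxx.
have gS : psi @: e \subset psi @: g by rewrite Eq imsetS.
have [E1|E1] := two_of_card2 N2 (S _ f1M (imsetS _ ef1)) (S _ f2M (imsetS _ ef2))
  (S _ gM gS) ab; last first.
  move/(Hinj _ _ gF f2F): E1 => E1; rewrite E1 in e'g.
  have [inj2 _] := Hf f2 f2F.
  exact: (inj_sub inj2 ef2 e'g Eq).
move/(Hinj _ _ gF f1F): E1 => E1; rewrite E1 in e'g.
exact: (inj_sub inj1 ef1 e'g Eq).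
Qed.



Lemma fr_eq (a b : nat) : (Posz a - Posz b = Posz 6)%R -> a = b + 6.
Proof. lia. Qed.
Lemma fr_le (a b : nat) : (Posz 6 <= Posz a - Posz b)%R -> b + 6 <= a.
Proof. lia. Qed.

Theorem lemma4p2 (V W W' : finType)
  (FM : {set {set V}}) (FD : {set {set W}}) (i : W -> V)
  (Hdata : torus_hole_data FM FD i)
  (HT : tight36 [set: V] (hole_graph_edges FM FD i))
  (FD' : {set {set W'}}) (psi : W' -> V)
  (HD' : disc_triangulation FD')
  (Hpsi : simp_map_inj2 FD' (hole_graph_faces FM FD i)
                            (hole_graph_edges FM FD i) psi)
  (c : seq W') (Hc : boundary_cycle FD' c)
  (Vk : {set V}) (Ek : {set {set V}})
  (HKsub : is_subgraph Vk Ek [set: V] (hole_graph_edges FM FD i))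
  (HKt : tight36 Vk Ek)
  (HKV : Vk :&: (psi @: cverts FD') = [set psi x | x in c])
  (HKE : Ek :&: [set psi @: e | e : {set W'} in cedges FD'] =
         [set psi @: e | e : {set W'} in bdry_edges FD']) :
  size (map psi c) = 3.
Proof.
case: Hdata => [[_ [_ [HM _]]] _ _ _].
have sHM : hole_graph_faces FM FD i \subset FM.
  by apply/subsetP=> f; rewrite /hole_graph_faces inE => /andP[].
have Einj := int_edge_inj HM sHM Hpsi.
case: Hpsi => [Hf He _].
case: Hc => [uc szc csub bdE].
have Hcount := disc_count HD'.
have Hne : FD' != set0 by case: HD' => [[]].
rewrite size_map.
set n := size c in szc bdE *.
set VD := cverts FD' in csub HKV Hcount *.
set VH := psi @: VD in HKV *.
set EH := [set psi @: e | e : {set W'} in cedges FD'] in HKE *.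
set pC := [set psi x | x in c] in HKV *.
set pB := [set psi @: e | e : {set W'} in bdry_edges FD'] in HKE *.
have cn : #|c| = n by rewrite (card_uniqP uc).
have hB : #|bdry_edges FD'| <= n.
  by rewrite bdE; apply: leq_trans (leq_imset_card _ _) _; rewrite cn.
have cVD : [set x in c] \subset VD by apply/subsetP=> x; rewrite inE; exact: csub.
have cs : #|[set x in c]| = n by rewrite cardsE cn.
have nVD : n <= #|VD| by rewrite -cs; exact: subset_leq_card.
have hV : #|VH| <= #|pC| + (#|VD| - n).
  have -> : VH = pC :|: psi @: (VD :\: [set x in c]).
    apply/setP => y; rewrite inE; apply/imsetP/orP.
      case=> x xV ->; case xc: (x \in c); [left|right]; apply/imsetP; exists x => //.
      by rewrite inE xV inE xc.
    case=> [/imsetP[x xc ->]|/imsetP[x /setDP[xV _] ->]]; exists x => //; exact: csub.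
  apply: leq_trans (leq_card_setU _ _) _; rewrite leq_add2l.
  apply: leq_trans (leq_imset_card _ _) _.
  by rewrite cardsD (setIidPr cVD) cs.
have hE : #|pB| + #|int_edges FD'| <= #|EH|.
  have -> : #|int_edges FD'| = #|[set psi @: e | e : {set W'} in int_edges FD']|.
    rewrite card_in_imset // => e e' eI e'I; apply: Einj => //.
    by move: e'I; rewrite memI => /andP[].
  have dj : pB :&: [set psi @: e | e : {set W'} in int_edges FD'] = set0.
    apply/setP => y; rewrite !inE; apply/negP => /andP[/imsetP[e1 e1B ->] /imsetP[e2 e2I E]].
    have e1E : e1 \in cedges FD' by move: e1B; rewrite memB => /andP[].
    have := Einj _ _ e2I e1E (esym E) => E2.
    move: e1B e2I; rewrite memB memI -E2 => /andP[_ /eqP ->] /andP[_ /eqP] //.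
  have := cardsUI pB [set psi @: e | e : {set W'} in int_edges FD'].
  rewrite dj cards0 addn0 => <-.
  apply: subset_leq_card; apply/subsetP => y; rewrite inE => /orP[]/imsetP[e eB ->];
    apply/imsetP; exists e => //.
    by move: eB; rewrite memB => /andP[].
  by move: eB; rewrite memI => /andP[].
have [_ HT2] := HT.
have [HK1 _] := HKt.
case: HKsub => [_ sEk sEkV].
have sub : is_subgraph (Vk :|: VH) (Ek :|: EH) [set: V] (hole_graph_edges FM FD i).
  split; first exact: subsetT.
    apply/subsetP => e; rewrite inE => /orP[/(subsetP sEk)//|/imsetP[e0 e0E ->]].
    exact: He.
  move=> e; rewrite inE => /orP[/sEkV eV|/imsetP[e0 e0E ->]].
    by apply: subset_trans eV (subsetUl _ _).
  apply: subset_trans (subsetUr _ _); apply: imsetS.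
  move: e0E; rewrite /cedges inE => /andP[_ /existsP[g /andP[gF e0g]]].
  apply: subset_trans e0g _; rewrite /VD /cverts; exact: bigcup_sup.
have big3 : 3 <= #|Vk :|: VH|.
  case/set0Pn: Hne => f fF.
  have [injf _] := Hf f fF.
  case: HD' => [[_ H3] _]. 
  apply: leq_trans (subset_leq_card (subsetUr Vk VH)).
  have sf : psi @: f \subset VH by apply: imsetS; rewrite /VD /cverts; exact: bigcup_sup.
  apply: leq_trans (subset_leq_card sf).
  by rewrite card_in_imset // H3.
have := HT2 _ _ sub big3.
rewrite /freedom in HK1 *.
have U1 := cardsUI Vk VH. have U2 := cardsUI Ek EH.
rewrite HKV in U1. rewrite HKE in U2.
move/fr_le => T; move/fr_eq: HK1 => HK1.
move: T HK1 U1 U2 hB hV hE Hcount szc nVD.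
move: #|Vk :|: VH| #|Ek :|: EH| #|Vk| #|VH| #|Ek| #|EH| #|pC| #|pB| #|VD| #|int_edges FD'| #|bdry_edges FD'|.
move=> *.
lia.
Qed.
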